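(* Assume $M$ is projective in $\sigma[M]$ and let $X\in\sigma[M]$. Then for every submodule $Y$ of $X$, either $\sqrt[M]{Y}=X$ or $\sqrt[M]{Y}$ is an $M$-semiprime submodule of $X$.
   Context: $R$ is a ring with identity, modules are unital left $R$-modules, $M$ is a fixed left $R$-module; $\sigma[M]$ is the full subcategory of $R$-modules isomorphic to submodules of $M$-generated modules. For $N\le M$ and a module $X$, $N\cdot X$ is the intersection of the kernels of all homomorphisms $X\to W$ where $W$ ranges over modules with $f(N)=0$ for all $f\in\mathrm{Hom}_R(M,W)$ (for $Z\le X$, $N\cdot Z$ is formed regarding $Z$ as a module); $N^2:=N\cdot N$. A proper submodule $P$ of $X$ is $M$-prime if for all $N\le M$, $Z\le X$, $N\cdot Z\subseteq P$ implies $N\cdot X\subseteq P$ or $Z\subseteq P$; it is $M$-semiprime if $N^2\cdot Z\subseteq P$ implies $N\cdot Z\subseteq P$ for all $N\le M$, $Z\le X$. A nonempty $S\subseteq X\setminus\{0\}$ is an $M$-$m$-system if for every $N\le M$ and all $Y,Z\le X$: $(Y+Z)\cap S\neq\emptyset$ and $(Y+N\cdot X)\cap S\neq\emptyset$ imply $(Y+N\cdot Z)\cap S\neq\emptyset$. For $Y\le X$: if some $M$-prime submodule of $X$ contains $Y$, $\sqrt[M]{Y}:=\{x\in X:$ every $M$-$m$-system containing $x$ meets $Y\}$; otherwise $\sqrt[M]{Y}:=X$. *)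

(* Defs.v *)
(* Left R-modules are [lmodType R] over [R : pzRingType]
   (a ring with identity).  Submodules are represented as predicates
   [V -> Prop] closed under the module operations. *)
From HB Require Import structures.
From mathcomp Require Import all_boot all_algebra.
Set Implicit Arguments. Unset Strict Implicit. Unset Printing Implicit Defensive.
Import GRing.Theory.
Local Open Scope ring_scope.

Section ModDefs.
Variable R : pzRingType.

Definition submod (V : lmodType R) (N : V -> Prop) : Prop :=
  N 0 /\ forall (a : R) (x y : V), N x -> N y -> N (a *: x + y).

Definition subp (V : lmodType R) (A B : V -> Prop) : Prop :=
  forall x, A x -> B x.

Definition fullp (V : lmodType R) : V -> Prop := fun _ => True.

Definition is_hom (V W : lmodType R) (f : V -> W) : Prop :=
  forall (a : R) (x y : V), f (a *: x + y) = a *: f x + f y.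

(* a homomorphism Z -> W, for a submodule Z of V, represented by any
   function V -> W whose restriction to Z is R-linear *)
Definition hom_on (V W : lmodType R) (Z : V -> Prop) (g : V -> W) : Prop :=
  forall (a : R) (x y : V), Z x -> Z y -> g (a *: x + y) = a *: g x + g y.

Definition annih (M : lmodType R) (N : M -> Prop) (W : lmodType R) : Prop :=
  forall f : M -> W, is_hom f -> forall m, N m -> f m = 0.

(* N . Z : intersection of the kernels of all homomorphisms Z -> W with
   W annihilated by N (Z regarded as a module) *)
Definition dotp (M X : lmodType R) (N : M -> Prop) (Z : X -> Prop) : X -> Prop :=
  fun x => Z x /\
    forall (W : lmodType R) (g : X -> W), hom_on Z g -> annih N W -> g x = 0.

Definition sqp (M : lmodType R) (N : M -> Prop) : M -> Prop := dotp N N.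

(* Y is M-generated: Y is generated by the images of all f in Hom(M, Y)
   (i.e. Y = Tr(M, Y), equivalently Y is an epimorphic image of M^(Lambda)) *)
Definition Mgenerated (M Y : lmodType R) : Prop :=
  forall T : Y -> Prop, submod T ->
    (forall f : M -> Y, is_hom f -> forall m, T (f m)) -> forall y, T y.

Definition in_sigma (M X : lmodType R) : Prop :=
  exists (Y : lmodType R) (f : X -> Y),
    [/\ is_hom f, injective f & Mgenerated M Y].

Definition projective_in_sigma (M : lmodType R) : Prop :=
  forall A B : lmodType R, in_sigma M A -> in_sigma M B ->
  forall g : A -> B, is_hom g -> (forall b, exists a, g a = b) ->
  forall h : M -> B, is_hom h ->
  exists f : M -> A, is_hom f /\ forall m, g (f m) = h m.

Definition sump (X : lmodType R) (A B : X -> Prop) : X -> Prop :=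
  fun x => exists y z, [/\ A y, B z & x = y + z].

Definition meets (X : lmodType R) (A B : X -> Prop) : Prop :=
  exists x, A x /\ B x.

Definition proper (X : lmodType R) (P : X -> Prop) : Prop :=
  exists x, ~ P x.

Definition Mprime (M X : lmodType R) (P : X -> Prop) : Prop :=
  [/\ submod P, proper P &
    forall (N : M -> Prop) (Z : X -> Prop), submod N -> submod Z ->
      subp (dotp N Z) P -> subp (dotp N (@fullp X)) P \/ subp Z P].

Definition Msemiprime (M X : lmodType R) (P : X -> Prop) : Prop :=
  [/\ submod P, proper P &
    forall (N : M -> Prop) (Z : X -> Prop), submod N -> submod Z ->
      subp (dotp (sqp N) Z) P -> subp (dotp N Z) P].

Definition m_system (M X : lmodType R) (S : X -> Prop) : Prop :=
  [/\ exists x, S x,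
      forall x, S x -> x <> 0 &
      forall (N : M -> Prop) (Y Z : X -> Prop), submod N -> submod Y -> submod Z ->
        meets (sump Y Z) S -> meets (sump Y (dotp N (@fullp X))) S ->
        meets (sump Y (dotp N Z)) S].

Definition Mrad (M X : lmodType R) (Y : X -> Prop) : X -> Prop :=
  fun x =>
    (~ exists P : X -> Prop, Mprime M P /\ subp Y P) \/
    (forall S : X -> Prop, m_system M S -> S x -> meets S Y).

End ModDefs.

(* Main.v *)
Require Import Defs.
From HB Require Import structures.
From mathcomp Require Import all_boot all_algebra.
From mathcomp Require Import boolp classical_sets functions.
Require Import Defs.
Set Implicit Arguments. Unset Strict Implicit. Unset Printing Implicit Defensive.
Import GRing.Theory.
Local Open Scope ring_scope.


Lemma sm0 (R : pzRingType) (V : lmodType R) (P : V -> Prop) : submod P -> P 0.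
Proof. by case. Qed.
Lemma smD (R : pzRingType) (V : lmodType R) (P : V -> Prop) x y :
  submod P -> P x -> P y -> P (x + y).
Proof. by case=> _ H Px Py; have := H 1 x y Px Py; rewrite scale1r. Qed.
Lemma smZ (R : pzRingType) (V : lmodType R) (P : V -> Prop) a x :
  submod P -> P x -> P (a *: x).
Proof. by case=> H0 H Px; have := H a x 0 Px H0; rewrite addr0. Qed.
Lemma smL (R : pzRingType) (V : lmodType R) (P : V -> Prop) a x y :
  submod P -> P x -> P y -> P (a *: x + y).
Proof. by case=> _ H; apply: H. Qed.
Lemma smN (R : pzRingType) (V : lmodType R) (P : V -> Prop) x :
  submod P -> P x -> P (- x).
Proof. by move=> HP Px; rewrite -scaleN1r; apply: smZ. Qed.
Lemma smB (R : pzRingType) (V : lmodType R) (P : V -> Prop) x y :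
  submod P -> P x -> P y -> P (x - y).
Proof. by move=> HP Px Py; apply: smD => //; apply: smN. Qed.
Lemma sm_sum (R : pzRingType) (V : lmodType R) (P : V -> Prop) (I : Type)
  (s : seq I) (F : I -> V) :
  submod P -> (forall i, P (F i)) -> P (\sum_(i <- s) F i).
Proof.
move=> HP HF; elim: s => [|i s IH]; first by rewrite big_nil; apply: sm0.
by rewrite big_cons; apply: smD.
Qed.

Lemma homL (R : pzRingType) (V W : lmodType R) (f : V -> W) :
  is_hom f -> forall a x y, f (a *: x + y) = a *: f x + f y.
Proof. by []. Qed.
Lemma hom0 (R : pzRingType) (V W : lmodType R) (f : V -> W) : is_hom f -> f 0 = 0.
Proof.
move=> hf; have := hf 1 0 0; rewrite !scale1r addr0 => H.
by apply: (addrI (f 0)); rewrite addr0 -H.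
Qed.
Lemma homD (R : pzRingType) (V W : lmodType R) (f : V -> W) x y :
  is_hom f -> f (x + y) = f x + f y.
Proof. by move=> hf; have := hf 1 x y; rewrite !scale1r. Qed.
Lemma homZ (R : pzRingType) (V W : lmodType R) (f : V -> W) a x :
  is_hom f -> f (a *: x) = a *: f x.
Proof. by move=> hf; have := hf a x 0; rewrite (hom0 hf) !addr0. Qed.
Lemma homN (R : pzRingType) (V W : lmodType R) (f : V -> W) x :
  is_hom f -> f (- x) = - f x.
Proof. by move=> hf; rewrite -scaleN1r homZ // scaleN1r. Qed.
Lemma homB (R : pzRingType) (V W : lmodType R) (f : V -> W) x y :
  is_hom f -> f (x - y) = f x - f y.
Proof. by move=> hf; rewrite homD // homN. Qed.
Lemma hom_sum (R : pzRingType) (V W : lmodType R) (f : V -> W) (I : Type)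
  (s : seq I) (F : I -> V) :
  is_hom f -> f (\sum_(i <- s) F i) = \sum_(i <- s) f (F i).
Proof.
move=> hf; elim: s => [|i s IH]; first by rewrite !big_nil hom0.
by rewrite !big_cons homD // IH.
Qed.
Lemma hom_comp (R : pzRingType) (U V W : lmodType R) (f : U -> V) (g : V -> W) :
  is_hom f -> is_hom g -> is_hom (fun x => g (f x)).
Proof. by move=> hf hg a x y; rewrite hf hg. Qed.
Lemma hom_full (R : pzRingType) (V W : lmodType R) (f : V -> W) :
  is_hom f <-> hom_on (@fullp R V) f.
Proof. by split=> h a x y; [move=> _ _|]; apply: h. Qed.

Definition subT (R : pzRingType) (V : lmodType R) (P : V -> Prop) (HP : submod P) :=
  {v : V | P v}.
HB.instance Definition _ R V P HP := gen_eqMixin (@subT R V P HP).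
HB.instance Definition _ R V P HP := gen_choiceMixin (@subT R V P HP).

Definition sv (R : pzRingType) (V : lmodType R) (P : V -> Prop) (HP : submod P)
  (u : subT HP) : V := proj1_sig u.

Lemma sv_inj (R : pzRingType) (V : lmodType R) (P : V -> Prop) (HP : submod P) :
  injective (@sv R V P HP).
Proof.
move=> [x px] [y py] /= E; rewrite /sv /= in E; subst y.
by rewrite (Prop_irrelevance px py).
Qed.

Definition sub_zero R V P (HP : submod P) : @subT R V P HP := exist _ 0 (sm0 HP).
Definition sub_add R V P (HP : submod P) (u w : @subT R V P HP) : subT HP :=
  exist _ (sv u + sv w) (smD HP (proj2_sig u) (proj2_sig w)).
Definition sub_opp R V P (HP : submod P) (u : @subT R V P HP) : subT HP :=
  exist _ (- sv u) (smN HP (proj2_sig u)).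
Definition sub_scale R V P (HP : submod P) a (u : @subT R V P HP) : subT HP :=
  exist _ (a *: sv u) (smZ a HP (proj2_sig u)).

Lemma sub_addA R V P HP : associative (@sub_add R V P HP).
Proof. by move=> x y z; apply: sv_inj; rewrite /= addrA. Qed.
Lemma sub_addC R V P HP : commutative (@sub_add R V P HP).
Proof. by move=> x y; apply: sv_inj; rewrite /= addrC. Qed.
Lemma sub_add0 R V P HP : left_id (@sub_zero R V P HP) (@sub_add R V P HP).
Proof. by move=> x; apply: sv_inj; rewrite /= add0r. Qed.
Lemma sub_addN R V P HP :
  left_inverse (@sub_zero R V P HP) (@sub_opp R V P HP) (@sub_add R V P HP).
Proof. by move=> x; apply: sv_inj; rewrite /= addNr. Qed.

HB.instance Definition _ R V P HP :=
  GRing.isZmodule.Build (@subT R V P HP) (@sub_addA R V P HP) (@sub_addC R V P HP)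
    (@sub_add0 R V P HP) (@sub_addN R V P HP).

Lemma sub_scaleA R V P HP a b (v : @subT R V P HP) :
  sub_scale a (sub_scale b v) = sub_scale (a * b) v.
Proof. by apply: sv_inj; rewrite /= scalerA. Qed.
Lemma sub_scale1 R V P HP : left_id 1 (@sub_scale R V P HP).
Proof. by move=> x; apply: sv_inj; rewrite /= scale1r. Qed.
Lemma sub_scaleDr R V P HP : right_distributive (@sub_scale R V P HP) +%R.
Proof. by move=> a x y; apply: sv_inj; rewrite /= scalerDr. Qed.
Lemma sub_scaleDl R V P HP (v : @subT R V P HP) :
  {morph (@sub_scale R V P HP)^~ v : a b / a + b}.
Proof. by move=> a b; apply: sv_inj; rewrite /= scalerDl. Qed.

HB.instance Definition _ R V P HP :=
  GRing.Zmodule_isLmodule.Build R (@subT R V P HP) (@sub_scaleA R V P HP)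
    (@sub_scale1 R V P HP) (@sub_scaleDr R V P HP) (@sub_scaleDl R V P HP).

Lemma sv_hom (R : pzRingType) (V : lmodType R) (P : V -> Prop) (HP : submod P) :
  is_hom (@sv R V P HP).
Proof. by []. Qed.

Lemma svP (R : pzRingType) (V : lmodType R) (P : V -> Prop) (HP : submod P)
  (u : subT HP) : P (sv u).
Proof. exact: proj2_sig u. Qed.


Definition coset (R : pzRingType) (V : lmodType R) (T : V -> Prop) (v : V) : V -> Prop :=
  fun w => T (w - v).

Definition quotT (R : pzRingType) (V : lmodType R) (T : V -> Prop) (HT : submod T) :=
  {A : V -> Prop | exists v, A = coset T v}.
HB.instance Definition _ R V T HT := gen_eqMixin (@quotT R V T HT).
HB.instance Definition _ R V T HT := gen_choiceMixin (@quotT R V T HT).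

Lemma exist_eqP (A : Type) (P : A -> Prop) x y (p : P x) (q : P y) :
  x = y -> exist P x p = exist P y q.
Proof. by move=> E; subst y; rewrite (Prop_irrelevance p q). Qed.

Definition qpi (R : pzRingType) (V : lmodType R) (T : V -> Prop) (HT : submod T)
  (v : V) : quotT HT := exist _ (coset T v) (ex_intro _ v erefl).

Lemma qpi_eq (R : pzRingType) (V : lmodType R) (T : V -> Prop) (HT : submod T) v w :
  qpi HT v = qpi HT w <-> T (v - w).
Proof.
split.
- move=> E; have : coset T v v = coset T w v by rewrite -[coset T v]/(proj1_sig (qpi HT v)) E.
  by rewrite /coset subrr => <-; apply: sm0.
- move=> Tvw; rewrite /qpi.
  have E : coset T v = coset T w.
    apply: funext => u; apply: propext; rewrite /coset; split => H.
    + by have := smD HT H Tvw; rewrite addrA subrK.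
    + by have := smB HT H Tvw; rewrite opprB addrA subrK.
  exact: exist_eqP.
Qed.

Definition qrep (R : pzRingType) (V : lmodType R) (T : V -> Prop) (HT : submod T)
  (q : quotT HT) : V := proj1_sig (cid (proj2_sig q)).

Lemma qrepK (R : pzRingType) (V : lmodType R) (T : V -> Prop) (HT : submod T)
  (q : quotT HT) : qpi HT (qrep q) = q.
Proof.
rewrite /qrep; case: (cid _) => v Ev /=; case: q Ev => A pA /= Ev; subst A.
by rewrite /qpi; congr exist; apply: Prop_irrelevance.
Qed.

Lemma qpi_surj (R : pzRingType) (V : lmodType R) (T : V -> Prop) (HT : submod T)
  (q : quotT HT) : exists v, q = qpi HT v.
Proof. by exists (qrep q); rewrite qrepK. Qed.

Lemma qrepP (R : pzRingType) (V : lmodType R) (T : V -> Prop) (HT : submod T) v :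
  T (qrep (qpi HT v) - v).
Proof. by apply/qpi_eq; rewrite qrepK. Qed.

Definition q_zero R V T (HT : submod T) : @quotT R V T HT := qpi HT 0.
Definition q_add R V T (HT : submod T) (q r : @quotT R V T HT) : quotT HT :=
  qpi HT (qrep q + qrep r).
Definition q_opp R V T (HT : submod T) (q : @quotT R V T HT) : quotT HT :=
  qpi HT (- qrep q).
Definition q_scale R V T (HT : submod T) a (q : @quotT R V T HT) : quotT HT :=
  qpi HT (a *: qrep q).

Lemma q_addE R V T HT v w : @q_add R V T HT (qpi HT v) (qpi HT w) = qpi HT (v + w).
Proof.
apply/qpi_eq; have := smD HT (qrepP HT v) (qrepP HT w).
by rewrite opprD addrACA.
Qed.
Lemma q_oppE R V T HT v : @q_opp R V T HT (qpi HT v) = qpi HT (- v).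
Proof. by apply/qpi_eq; have := smN HT (qrepP HT v); rewrite opprB opprK addrC. Qed.
Lemma q_scaleE R V T HT a v : @q_scale R V T HT a (qpi HT v) = qpi HT (a *: v).
Proof. by apply/qpi_eq; have := smZ a HT (qrepP HT v); rewrite scalerBr. Qed.

Lemma q_addA R V T HT : associative (@q_add R V T HT).
Proof.
move=> x y z; have [a ->] := qpi_surj x; have [b ->] := qpi_surj y.
by have [c ->] := qpi_surj z; rewrite !q_addE addrA.
Qed.
Lemma q_addC R V T HT : commutative (@q_add R V T HT).
Proof.
by move=> x y; have [a ->] := qpi_surj x; have [b ->] := qpi_surj y; rewrite !q_addE addrC.
Qed.
Lemma q_add0 R V T HT : left_id (@q_zero R V T HT) (@q_add R V T HT).
Proof. by move=> x; have [a ->] := qpi_surj x; rewrite /q_zero q_addE add0r. Qed.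
Lemma q_addN R V T HT :
  left_inverse (@q_zero R V T HT) (@q_opp R V T HT) (@q_add R V T HT).
Proof. by move=> x; have [a ->] := qpi_surj x; rewrite q_oppE q_addE addNr. Qed.

HB.instance Definition _ R V T HT :=
  GRing.isZmodule.Build (@quotT R V T HT) (@q_addA R V T HT) (@q_addC R V T HT)
    (@q_add0 R V T HT) (@q_addN R V T HT).

Lemma q_scaleA R V T HT a b (v : @quotT R V T HT) :
  q_scale a (q_scale b v) = q_scale (a * b) v.
Proof. by have [x ->] := qpi_surj v; rewrite !q_scaleE scalerA. Qed.
Lemma q_scale1 R V T HT : left_id 1 (@q_scale R V T HT).
Proof. by move=> v; have [x ->] := qpi_surj v; rewrite !q_scaleE scale1r. Qed.
Lemma q_scaleDr R V T HT : right_distributive (@q_scale R V T HT) +%R.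
Proof.
move=> a v w; have [x ->] := qpi_surj v; have [y ->] := qpi_surj w.
by rewrite /GRing.add /= q_addE !q_scaleE q_addE scalerDr.
Qed.
Lemma q_scaleDl R V T HT (v : @quotT R V T HT) :
  {morph (@q_scale R V T HT)^~ v : a b / a + b}.
Proof.
move=> a b; have [x ->] := qpi_surj v.
by rewrite /GRing.add /= !q_scaleE q_addE scalerDl.
Qed.

HB.instance Definition _ R V T HT :=
  GRing.Zmodule_isLmodule.Build R (@quotT R V T HT) (@q_scaleA R V T HT)
    (@q_scale1 R V T HT) (@q_scaleDr R V T HT) (@q_scaleDl R V T HT).

Lemma qpi_hom (R : pzRingType) (V : lmodType R) (T : V -> Prop) (HT : submod T) :
  is_hom (qpi HT).
Proof.
move=> a x y; rewrite -[_ + qpi HT y]/(q_add _ _) -[_ *: qpi HT x]/(q_scale _ _).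
by rewrite q_scaleE q_addE.
Qed.

Lemma qpi0 (R : pzRingType) (V : lmodType R) (T : V -> Prop) (HT : submod T) v :
  qpi HT v = 0 <-> T v.
Proof. by rewrite -(hom0 (qpi_hom HT)) qpi_eq subr0. Qed.


Lemma in_sigma_sub (R : pzRingType) (M V : lmodType R) (P : V -> Prop) (HP : submod P) :
  in_sigma M V -> in_sigma M (subT HP).
Proof.
case=> Y [f [hf injf gY]]; exists Y, (fun u => f (sv u)); split => //.
- exact: hom_comp.
- by move=> u w /injf /sv_inj.
Qed.

Definition imgp (R : pzRingType) (V W : lmodType R) (f : V -> W) (T : V -> Prop) : W -> Prop :=
  fun y => exists v, T v /\ y = f v.

Lemma imgp_submod (R : pzRingType) (V W : lmodType R) (f : V -> W) (T : V -> Prop) :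
  is_hom f -> submod T -> submod (imgp f T).
Proof.
move=> hf HT; split; first by exists 0; split; [apply: sm0|rewrite hom0].
move=> a _ _ [x [Tx ->]] [y [Ty ->]]; exists (a *: x + y); split; last by rewrite hf.
exact: smL.
Qed.

Lemma in_sigma_quot (R : pzRingType) (M V : lmodType R) (T : V -> Prop) (HT : submod T) :
  in_sigma M V -> in_sigma M (quotT HT).
Proof.
case=> Y [f [hf injf gY]].
pose HT' := imgp_submod hf HT.
pose F (q : quotT HT) := qpi HT' (f (qrep q)).
have FE v : F (qpi HT v) = qpi HT' (f v).
  rewrite /F; apply/qpi_eq; rewrite -homB //; exists (qrep (qpi HT v) - v).
  by split => //; apply: qrepP.
exists (quotT HT'), F; split.
- move=> a x y; have [u ->] := qpi_surj x; have [w ->] := qpi_surj y.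
  by rewrite -(qpi_hom HT) !FE hf (qpi_hom HT').
- move=> x y; have [u ->] := qpi_surj x; have [w ->] := qpi_surj y.
  rewrite !FE => /qpi_eq [z [Tz E]]; apply/qpi_eq.
  by move: E; rewrite -homB // => /injf ->.
- move=> Tq HTq HTf q; have [y ->] := qpi_surj q.
  pose Tp := fun y => Tq (qpi HT' y).
  have HTp : submod Tp.
    split; first by rewrite /Tp (hom0 (qpi_hom HT')); apply: sm0.
    by move=> a x z; rewrite /Tp (qpi_hom HT'); apply: smL.
  suff H : forall y, Tp y by exact: H y.
  apply: (gY Tp HTp) => g hg m.
  exact: (HTf (fun m => qpi HT' (g m)) (hom_comp hg (qpi_hom HT')) m).
Qed.

Definition tr (R : pzRingType) (M V : lmodType R) (N : M -> Prop) : V -> Prop :=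
  fun v => forall T : V -> Prop, submod T ->
    (forall f : M -> V, is_hom f -> forall n, N n -> T (f n)) -> T v.

Lemma tr_submod (R : pzRingType) (M V : lmodType R) (N : M -> Prop) :
  submod (@tr R M V N).
Proof.
split; first by move=> T HT _; apply: sm0.
by move=> a x y Tx Ty T HT H; apply: smL => //; [apply: Tx|apply: Ty].
Qed.

Lemma trace_lemma (R : pzRingType) (M V : lmodType R) (N : M -> Prop) :
  projective_in_sigma M -> in_sigma M V ->
  forall v, dotp N (@fullp R V) v -> tr N v.
Proof.
move=> proj HV v [_ Hv].
pose HT := @tr_submod R M V N.
apply/(qpi0 HT); apply: Hv; first by apply/hom_full/qpi_hom.
move=> h hh m Nm.
have [f' [hf' E]] := proj V (quotT HT) HV (in_sigma_quot HT HV) (qpi HT) (qpi_hom HT)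
  (fun b => let: ex_intro a E := qpi_surj b in ex_intro _ a (esym E)) h hh.
by rewrite -E; apply/qpi0 => T HTT H; apply: H.
Qed.


Lemma dotp_sub (R : pzRingType) (M X : lmodType R) (N : M -> Prop) (Z : X -> Prop) x :
  dotp N Z x -> Z x.
Proof. by case. Qed.

Lemma dotp_submod (R : pzRingType) (M X : lmodType R) (N : M -> Prop) (Z : X -> Prop) :
  submod Z -> submod (dotp N Z).
Proof.
move=> HZ; split.
- split; first exact: sm0.
  move=> W g hg _; have := hg 1 0 0 (sm0 HZ) (sm0 HZ); rewrite !scale1r addr0 => H.
  by apply: (addrI (g 0)); rewrite addr0 -H.
- move=> a x y [Zx Hx] [Zy Hy]; split; first exact: smL.
  by move=> W g hg aN; rewrite hg // (Hx W g hg aN) (Hy W g hg aN) scaler0 addr0.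
Qed.

Lemma dotp_mono (R : pzRingType) (M X : lmodType R) (N : M -> Prop) (Z Z' : X -> Prop) :
  subp Z Z' -> subp (dotp N Z) (dotp N Z').
Proof.
move=> ZZ' x [Zx Hx]; split; first exact: ZZ'.
by move=> W g hg aN; apply: Hx => // a u v Zu Zv; apply: hg; apply: ZZ'.
Qed.

Definition homT (R : pzRingType) (M X : lmodType R) := {f : M -> X | is_hom f}.
HB.instance Definition _ R M X := gen_eqMixin (@homT R M X).
HB.instance Definition _ R M X := gen_choiceMixin (@homT R M X).

Definition fs (R : pzRingType) (M X : lmodType R) (phi : homT M X -> M) : Prop :=
  exists s : seq (homT M X), forall f, f \notin s -> phi f = 0.

Lemma fs_submod (R : pzRingType) (M X : lmodType R) : submod (@fs R M X).
Proof.
split; first by exists [::].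
move=> a x y [s Hs] [t Ht]; exists (s ++ t) => f; rewrite mem_cat negb_or => /andP[fs ft].
by rewrite -[(a *: x + y) f]/(a *: x f + y f) Hs // Ht // scaler0 addr0.
Qed.

Notation Msum M X := (subT (@fs_submod _ M X)).

Definition p0 (R : pzRingType) (M X : lmodType R) (phi : homT M X -> M)
  (s : seq (homT M X)) : X := \sum_(f <- s) proj1_sig f (phi f).

Lemma p0_indep (R : pzRingType) (M X : lmodType R) (phi : homT M X -> M) s t :
  uniq s -> uniq t -> (forall f, f \notin s -> phi f = 0) ->
  (forall f, f \notin t -> phi f = 0) -> p0 phi s = p0 phi t.
Proof.
move=> us ut Hs Ht.
have E (u v : seq (homT M X)) : (forall f, f \notin v -> phi f = 0) ->
    p0 phi u = \sum_(f <- filter (mem v) u) proj1_sig f (phi f).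
  move=> Hv; rewrite big_filter /p0 (bigID (mem v)) /= [X in _ + X]big1 ?addr0 //.
  by move=> f /Hv ->; rewrite (hom0 (proj2_sig f)).
rewrite (E s t Ht) (E t s Hs); apply: perm_big; apply: uniq_perm.
- exact: filter_uniq.
- exact: filter_uniq.
- by move=> f; rewrite !mem_filter andbC.
Qed.

Definition supp (R : pzRingType) (M X : lmodType R) (phi : Msum M X) : seq (homT M X) :=
  undup (proj1_sig (cid (svP phi))).

Lemma supp_uniq (R : pzRingType) (M X : lmodType R) (phi : Msum M X) : uniq (supp phi).
Proof. exact: undup_uniq. Qed.

Lemma supp_cov (R : pzRingType) (M X : lmodType R) (phi : Msum M X) f :
  f \notin supp phi -> sv phi f = 0.
Proof. by rewrite /supp mem_undup; case: (cid _) => s Hs /= /Hs. Qed.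

Definition pp (R : pzRingType) (M X : lmodType R) (phi : Msum M X) : X :=
  p0 (sv phi) (supp phi).

Lemma pp_any (R : pzRingType) (M X : lmodType R) (phi : Msum M X) s :
  uniq s -> (forall f, f \notin s -> sv phi f = 0) -> pp phi = p0 (sv phi) s.
Proof. by move=> us Hs; apply: p0_indep => //; [apply: supp_uniq|apply: supp_cov]. Qed.

Lemma pp_hom (R : pzRingType) (M X : lmodType R) : is_hom (@pp R M X).
Proof.
move=> a x y.
pose s := undup (supp x ++ supp y ++ supp (a *: x + y)).
have us : uniq s by apply: undup_uniq.
have cov (z : Msum M X) : subseq (supp z) (supp z) -> (forall f, f \notin supp z -> sv z f = 0).
  by move=> _; apply: supp_cov.
have cs (z : Msum M X) : {subset supp z <= s} -> forall f, f \notin s -> sv z f = 0.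
  by move=> sub f fs; apply: supp_cov; apply: contra fs; apply: sub.
rewrite (pp_any us (cs _ _)); last by move=> f fz; rewrite /s mem_undup !mem_cat fz ?orbT.
rewrite (pp_any us (cs _ _)); last by move=> f fz; rewrite /s mem_undup !mem_cat fz ?orbT.
rewrite (pp_any us (cs _ _)); last by move=> f fz; rewrite /s mem_undup !mem_cat fz ?orbT.
rewrite /p0 scaler_sumr -big_split /=; apply: eq_bigr => f _.
by rewrite (proj2_sig f).
Qed.

Definition delta_fun (R : pzRingType) (M X : lmodType R) (f0 : homT M X) (m : M) :
  homT M X -> M := fun f => if f == f0 then m else 0.

Lemma delta_fs (R : pzRingType) (M X : lmodType R) (f0 : homT M X) (m : M) :
  fs (delta_fun f0 m).
Proof.
by exists [:: f0] => f; rewrite mem_seq1 /delta_fun => /negbTE ->.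
Qed.

Definition delta (R : pzRingType) (M X : lmodType R) (f0 : homT M X) (m : M) : Msum M X :=
  exist _ (delta_fun f0 m) (delta_fs f0 m).

Lemma delta_hom (R : pzRingType) (M X : lmodType R) (f0 : homT M X) :
  is_hom (delta f0).
Proof.
move=> a x y; apply: sv_inj; apply: funext => f.
rewrite -[RHS]/(a *: delta_fun f0 x f + delta_fun f0 y f) /= /delta_fun.
by case: (f == f0); rewrite ?scaler0 ?addr0.
Qed.

Lemma pp_delta (R : pzRingType) (M X : lmodType R) (f0 : homT M X) (m : M) :
  pp (delta f0 m) = proj1_sig f0 m.
Proof.
rewrite (@pp_any _ _ _ _ [:: f0]) //; last first.
  by move=> f; rewrite mem_seq1 /= /delta_fun => /negbTE ->.
by rewrite /p0 big_cons big_nil addr0 /= /delta_fun eqxx.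
Qed.

Lemma sv_sum (R : pzRingType) (V : lmodType R) (P : V -> Prop) (HP : submod P)
  (I : Type) (s : seq I) (F : I -> subT HP) :
  sv (\sum_(i <- s) F i) = \sum_(i <- s) sv (F i).
Proof. exact: hom_sum (@sv_hom _ _ _ HP). Qed.

Lemma sum_if_eq (R : pzRingType) (M X : lmodType R) (phi : homT M X -> M)
  (s : seq (homT M X)) f :
  uniq s -> \sum_(f' <- s) (if f == f' then phi f' else 0) = if f \in s then phi f else 0.
Proof.
elim: s => [|a s IH]; first by rewrite big_nil.
rewrite /= big_cons inE => /andP[nas us]; rewrite IH //.
case: (eqVneq f a) => [->|_] /=; last by rewrite add0r.
by rewrite (negbTE nas) addr0.
Qed.

Lemma Msum_gen (R : pzRingType) (M X : lmodType R) : Mgenerated M (Msum M X).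
Proof.
move=> T HT Hf phi.
have -> : phi = \sum_(f <- supp phi) delta f (sv phi f).
  apply: sv_inj; rewrite sv_sum fct_sumE; apply: funext => f /=.
  rewrite /delta_fun sum_if_eq ?supp_uniq //.
  by case: ifP => // /negbT /supp_cov ->.
apply: sm_sum => // f; exact: Hf (delta_hom f) _.
Qed.

Lemma in_sigma_Msum (R : pzRingType) (M X : lmodType R) : in_sigma M (Msum M X).
Proof. by exists (Msum M X), id; split => //; exact: Msum_gen. Qed.


Lemma fullp_submod (R : pzRingType) (X : lmodType R) : submod (@fullp R X).
Proof. by []. Qed.

Definition Vsub (R : pzRingType) (M X : lmodType R) (N : M -> Prop) :=
  dotp_submod N (@fullp_submod R X).

Definition Apred (R : pzRingType) (M X : lmodType R) (N : M -> Prop)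
  (phi : Msum M X) : Prop :=
  (forall f, N (sv phi f)) /\ dotp N (@fullp R X) (pp phi).

Lemma Apred_submod (R : pzRingType) (M X : lmodType R) (N : M -> Prop) :
  submod N -> submod (@Apred R M X N).
Proof.
move=> HN; split.
- split; first by move=> f; apply: sm0.
  have -> : pp (0 : Msum M X) = 0 by apply: (hom0 (@pp_hom R M X)).
  exact: sm0 (Vsub _ _).
- move=> a x y [Nx Vx] [Ny Vy]; split.
  + by move=> f; rewrite -[sv (a *: x + y) f]/(a *: sv x f + sv y f); apply: smL.
  + by rewrite pp_hom; apply: smL => //; apply: Vsub.
Qed.

Definition pA (R : pzRingType) (M X : lmodType R) (N : M -> Prop) (HN : submod N)
  (phi : subT (@Apred_submod R M X N HN)) : subT (@Vsub R M X N) :=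
  exist _ (pp (sv phi)) (proj2 (svP phi)).

Lemma pA_hom (R : pzRingType) (M X : lmodType R) (N : M -> Prop) (HN : submod N) :
  is_hom (@pA R M X N HN).
Proof. by move=> a x y; apply: sv_inj; rewrite /= pp_hom. Qed.

Lemma pA_surj (R : pzRingType) (M X : lmodType R) (N : M -> Prop) (HN : submod N) :
  projective_in_sigma M -> in_sigma M X ->
  forall u, exists phi, @pA R M X N HN phi = u.
Proof.
move=> proj HX u.
have trU : tr N (sv u) by apply: trace_lemma => //; exact: svP.
pose I := fun y : X => exists phi : Msum M X, (forall f, N (sv phi f)) /\ pp phi = y.
have HI : submod I.
  split; first by exists 0; split => [f|]; [apply: sm0|apply: (hom0 (@pp_hom R M X))].
  move=> a _ _ [x [Nx <-]] [y [Ny <-]]; exists (a *: x + y); split; last exact: pp_hom.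
  by move=> f; rewrite -[sv (a *: x + y) f]/(a *: sv x f + sv y f); apply: smL.
have [phi [Nphi Ephi]] : I (sv u).
  apply: trU => // f hf n Nn; exists (delta (exist _ f hf) n); split.
  + by move=> f'; rewrite /= /delta_fun; case: ifP => _ //; apply: sm0.
  + by rewrite pp_delta.
have Aphi : Apred N phi by split => //; rewrite Ephi; exact: svP.
exists (exist _ phi Aphi); apply: sv_inj; exact: Ephi.
Qed.

Lemma in_sigma_A (R : pzRingType) (M X : lmodType R) (N : M -> Prop) (HN : submod N) :
  in_sigma M (subT (@Apred_submod R M X N HN)).
Proof. apply: in_sigma_sub; exact: in_sigma_Msum. Qed.

Lemma coreD (R : pzRingType) (M X : lmodType R) (N : M -> Prop) (HN : submod N) :
  projective_in_sigma M -> in_sigma M X ->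
  forall k : M -> subT (@Vsub R M X N), is_hom k ->
  forall (W : lmodType R) (g : X -> W), is_hom g -> annih (sqp N) W ->
  forall n, N n -> g (sv (k n)) = 0.
Proof.
move=> proj HX k hk W g hg aW n Nn.
have [kt [hkt Ekt]] := proj _ _ (@in_sigma_A R M X N HN) (in_sigma_sub (@Vsub R M X N) HX)
   (@pA R M X N HN) (@pA_hom R M X N HN) (@pA_surj R M X N HN proj HX) k hk.
rewrite -Ekt /= /pp /p0 (hom_sum _ _ hg) big1 // => f _.
pose e := fun m => sv (sv (kt m)) f.
have he : is_hom e by move=> a x y; rewrite /e hkt.
have Ne m : N (e m) by case: (svP (kt m)) => H _; apply: H.
have := aW (fun m => g (proj1_sig f m)) (hom_comp (proj2_sig f) hg) (e n).
apply; split; first exact: Ne.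
move=> W0 g0 hg0 aN0; apply: (aN0 (fun m => g0 (e m))) => // a x y.
by rewrite he hg0.
Qed.

Definition extend (R : pzRingType) (X W : lmodType R) (P : X -> Prop) (HP : submod P)
  (G : subT HP -> W) : X -> W :=
  fun y => match pselect (P y) with left h => G (exist _ y h) | right _ => 0 end.

Lemma extendE (R : pzRingType) (X W : lmodType R) (P : X -> Prop) (HP : submod P)
  (G : subT HP -> W) (u : subT HP) : extend G (sv u) = G u.
Proof.
rewrite /extend; case: pselect => [h|]; last by case: u => y /= h; move/(_ h).
by congr G; apply: sv_inj.
Qed.

Lemma extend_hom (R : pzRingType) (X W : lmodType R) (P : X -> Prop) (HP : submod P)
  (G : subT HP -> W) : is_hom G -> hom_on P (extend G).
Proof.
move=> hG a x y Px Py.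
have -> : a *: x + y = sv (a *: (exist _ x Px : subT HP) + exist _ y Py) by [].
by rewrite !extendE hG -(extendE G (exist _ x Px)) -(extendE G (exist _ y Py)).
Qed.

Lemma crux (R : pzRingType) (M X : lmodType R) (N : M -> Prop) (HN : submod N) :
  projective_in_sigma M -> in_sigma M X ->
  subp (dotp N (dotp N (@fullp R X))) (dotp (sqp N) (@fullp R X)).
Proof.
move=> proj HX x [Vx Hx]; split => // W g /hom_full hg aW.
pose u : subT (@Vsub R M X N) := exist _ x Vx.
have du : dotp N (@fullp R _) u.
  split => // W0 G /hom_full hG aN0.
  by rewrite -extendE; apply: (Hx W0 (extend G)) => //; apply: extend_hom.
have tu := trace_lemma proj (in_sigma_sub (@Vsub R M X N) HX) du.
pose T := fun w : subT (@Vsub R M X N) => g (sv w) = 0.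
have HT : submod T.
  split; first by rewrite /T (hom0 hg).
  by move=> a y z; rewrite /T hg => -> ->; rewrite scaler0 addr0.
exact: (tu T HT (fun k hk n Nn => coreD HN proj HX hk hg aW Nn)).
Qed.


Lemma nnpp (P : Prop) : ~ ~ P -> P.
Proof. by case: (lem P) => // H /(_ H). Qed.

Lemma prime_semiprime (R : pzRingType) (M X : lmodType R) (P : X -> Prop) :
  projective_in_sigma M -> in_sigma M X -> Mprime M P ->
  forall (N : M -> Prop) (Z : X -> Prop), submod N -> submod Z ->
  subp (dotp (sqp N) Z) P -> subp (dotp N Z) P.
Proof.
move=> proj HX [HP _ Hpr] N Z HN HZ H.
have HsqN : submod (sqp N) by apply: dotp_submod.
case: (Hpr _ _ HsqN HZ H) => [H2|ZP]; last by move=> x /dotp_sub /ZP.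
have H3 : subp (dotp N (dotp N (@fullp R X))) P.
  by move=> x /(crux HN proj HX) /H2.
have HV := @Vsub R M X N.
have H4 : subp (dotp N (@fullp R X)) P by case: (Hpr _ _ HN HV H3).
by move=> x /(dotp_mono (N := N) (Z' := @fullp R X) (fun _ _ => I)) /H4.
Qed.

Lemma sump_submod (R : pzRingType) (X : lmodType R) (A B : X -> Prop) :
  submod A -> submod B -> submod (sump A B).
Proof.
move=> HA HB; split; first by exists 0, 0; split; rewrite ?addr0 //; apply: sm0.
move=> a _ _ [y1 [z1 [Ay1 Bz1 ->]]] [y2 [z2 [Ay2 Bz2 ->]]].
exists (a *: y1 + y2), (a *: z1 + z2); split; try exact: smL.
by rewrite scalerDr addrACA.
Qed.

Lemma sump_l (R : pzRingType) (X : lmodType R) (A B : X -> Prop) y :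
  submod B -> A y -> sump A B y.
Proof. by move=> HB Ay; exists y, 0; split; rewrite ?addr0 //; apply: sm0. Qed.

Lemma sump_sub (R : pzRingType) (X : lmodType R) (A B C : X -> Prop) :
  submod C -> subp A C -> subp B C -> subp (sump A B) C.
Proof. by move=> HC HAC HBC _ [y [z [Ay Bz ->]]]; apply: smD => //; [apply: HAC|apply: HBC]. Qed.

Lemma compl_msys (R : pzRingType) (M X : lmodType R) (P : X -> Prop) :
  Mprime M P -> m_system M (fun x => ~ P x).
Proof.
move=> [HP [x Px] Hpr]; split; first by exists x.
- by move=> y Py E; apply: Py; rewrite E; apply: sm0.
move=> N Y Z HN HY HZ [w [Hw1 Hw2]] [v [Hv1 Hv2]]; apply: nnpp => Hn.
have HS : subp (sump Y (dotp N Z)) P.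
  by move=> u Hu; apply: nnpp => Pu; apply: Hn; exists u.
have YP : subp Y P by move=> y Yy; apply: HS; apply: sump_l => //; apply: dotp_submod.
have NZP : subp (dotp N Z) P.
  move=> z Hz; apply: HS; exists 0, z; split; rewrite ?add0r //; exact: sm0.
case: (Hpr _ _ HN HZ NZP) => [H|H].
- by apply: Hv2; apply: (sump_sub HP YP H).
- by apply: Hw2; apply: (sump_sub HP YP H).
Qed.

Lemma exists_prime (R : pzRingType) (M X : lmodType R) (S Y : X -> Prop) :
  m_system M S -> submod Y -> ~ meets S Y ->
  exists P, [/\ Mprime M P, subp Y P & forall x, S x -> ~ P x].
Proof.
move=> [[s Ss] S0 Hms] HY nSY.
pose C := fun A : set X => A = set0 \/ [/\ submod A, subp Y A & forall x, S x -> ~ A x].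
have [A [CA Amax]] : exists A, C A /\ forall B, (A `<` B)%classic -> ~ C B.
  apply: Zorn_bigcup => F FC Ftot.
  case: (lem (exists A, F A /\ A 0)) => [[A0 [FA0 A00]]|nex]; last first.
    left; apply: funext => x; apply: propext; split => // -[A FA Ax].
    case: (FC A FA) => [EA|[HA _ _]]; first by rewrite EA in Ax.
    by apply: nex; exists A; split => //; apply: sm0.
  have CA0 : submod A0 /\ subp Y A0 /\ forall x, S x -> ~ A0 x.
    case: (FC A0 FA0) => [EA|[? ? ?]] //; by rewrite EA in A00.
  have Fsub A x : F A -> A x -> [/\ submod A, subp Y A & forall x, S x -> ~ A x].
    by move=> FA Ax; case: (FC A FA) => // EA; rewrite EA in Ax.
  right; split.
  - split; first by exists A0.
    move=> a x y [A1 FA1 A1x] [A2 FA2 A2y].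
    case: (Ftot A1 A2 FA1 FA2) => [s12|s21].
    + exists A2 => //; have [H2 _ _] := Fsub A2 y FA2 A2y; apply: smL => //; exact: s12.
    + exists A1 => //; have [H1 _ _] := Fsub A1 x FA1 A1x; apply: smL => //; exact: s21.
  - by move=> y Yy; exists A0 => //; case: CA0 => _ [+ _]; apply.
  - move=> x Sx [A FA Ax]; have [_ _ H] := Fsub A x FA Ax; exact: H x Sx Ax.
case: CA => [EA|[HA YA SA]].
  exfalso; apply: (Amax Y); last by right; split => // x Sx Yx; apply: nSY; exists x.
  rewrite EA; split; first by [].
  by move=> /(_ 0 (sm0 HY)).
have maxA B : submod B -> subp A B -> (forall x, S x -> ~ B x) -> subp B A.
  move=> HB AB SB; apply: nnpp => nBA; apply: (Amax B); first by split.
  right; split => // y Yy; apply: AB; exact: YA.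
exists A; split => //; split => //; first by exists s => /(SA s Ss).
move=> N Z HN HZ NZA; apply: nnpp => Hn.
have nXA : ~ subp (dotp N (@fullp R X)) A by move=> H; apply: Hn; left.
have nZA : ~ subp Z A by move=> H; apply: Hn; right.
have m1 : meets (sump A Z) S.
  apply: nnpp => nm; apply: nZA => z Zz; apply: (maxA (sump A Z)).
  - exact: sump_submod.
  - by move=> y Ay; apply: sump_l.
  - by move=> x Sx Hx; apply: nm; exists x.
  - by exists 0, z; split; rewrite ?add0r //; apply: sm0.
have m2 : meets (sump A (dotp N (@fullp R X))) S.
  apply: nnpp => nm; apply: nXA => z Zz; apply: (maxA (sump A (dotp N (@fullp R X)))).
  - by apply: sump_submod => //; apply: dotp_submod.
  - by move=> y Ay; apply: sump_l => //; apply: dotp_submod.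
  - by move=> x Sx Hx; apply: nm; exists x.
  - by exists 0, z; split; rewrite ?add0r //; apply: sm0.
have [w [Hw Sw]] := Hms N A Z HN HA HZ m1 m2.
by apply: (SA w Sw); apply: (sump_sub HA (fun _ h => h) NZA).
Qed.

Lemma Mrad_char (R : pzRingType) (M X : lmodType R) (Y : X -> Prop) :
  submod Y -> (exists P, Mprime M P /\ subp Y P) ->
  forall x, Mrad M Y x <-> (forall P, Mprime M P -> subp Y P -> P x).
Proof.
move=> HY Ex x; split.
- case => [nEx|H]; first by case: (nEx Ex).
  move=> P HP YP; apply: nnpp => nPx.
  have [y [nPy Yy]] := H _ (compl_msys HP) nPx.
  by apply: nPy; apply: YP.
- move=> H; right => S HS Sx; apply: nnpp => nSY.
  have [P [HP YP SP]] := exists_prime HS HY nSY.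
  exact: SP x Sx (H P HP YP).
Qed.

Theorem corollary2p26 (R : pzRingType) (M X : lmodType R) :
  projective_in_sigma M -> in_sigma M X ->
  forall Y : X -> Prop, submod Y ->
    (forall x, Mrad M Y x) \/ Msemiprime M (Mrad M Y).
Proof.
move=> proj HX Y HY.
case: (lem (exists P, Mprime M P /\ subp Y P)) => [Ex|nEx]; last by left => x; left.
right; have ch := Mrad_char HY Ex.
split.
- split.
  + by apply/ch => P [HP _ _] _; apply: sm0.
  + move=> a x y /(ch x) Hx /(ch y) Hy; apply/(ch _) => P HP YP.
    by case: (HP) => HP' _ _; apply: smL => //; [apply: Hx|apply: Hy].
- case: Ex => P [[HP [x nPx] Hpr] YP]; exists x => /(ch x) H.
  have Pm : Mprime M P := And3 HP (ex_intro _ x nPx) Hpr. by apply: nPx; apply: H.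
- move=> N Z HN HZ H x Hx; apply/(ch x) => P HP YP.
  apply: (prime_semiprime proj HX HP HN HZ _ Hx) => y Hy.
  by move/(ch y): (H y Hy); apply.
Qed.
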